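(* Consider the quickest change detection setting and the NGLR-CuSum stopping time $\widehat{\tau}(b)$ with window size $m_b$, as defined in the context. Suppose the density estimator is such that there exists $\varsigma>0$ with $$\mathbb{E}_\infty\Big[\max_{n:\,k\le n\le k+m_b}\prod_{i=k}^{n}\frac{\widehat{p}^{n,k}_{-i}(X_i)}{p_0(X_i)}\Big]\le b^{\varsigma}\quad\text{for every } k\ge 1$$ for any large enough $b$. For $\alpha\in(0,1)$ let $b_\alpha$ satisfy $b_\alpha-\varsigma\log b_\alpha=|\log\alpha|+\log 8$. Then $\mathbb{E}_\infty[\widehat{\tau}(b_\alpha)]\ge\alpha^{-1}(1+o(1))$ as $\alpha\to 0$.
   Context: Let $X_1,X_2,\dots\in\mathbb{R}^d$ be independent; for an unknown deterministic change-point $\nu\ge1$, $X_1,\dots,X_{\nu-1}$ have (known) density $p_0$ and $X_\nu,X_{\nu+1},\dots$ have (unknown) density $p_1$, both w.r.t. a dominating measure $\mu$. $\mathbb{P}_\nu,\mathbb{E}_\nu$ denote probability and expectation when the change-point is $\nu$; $\mathbb{P}_\infty,\mathbb{E}_\infty$ when no change occurs (all observations have density $p_0$). A fixed density estimation procedure maps a finite collection of observations to a density w.r.t. $\mu$; for $1\le k\le i\le n$, $\widehat{p}^{n,k}_{-i}$ denotes its output on $X_k,\dots,X_{i-1},X_{i+1},\dots,X_n$. Define $\widehat{Z}^{n,k}_i:=\log\big(\widehat{p}^{n,k}_{-i}(X_i)/p_0(X_i)\big)$ for $k\le i\le n$, and for a threshold $b>0$ and window size $m_b$ (a positive integer depending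 on $b$, with $\liminf_{b\to\infty} m_b/b\ge\eta/I$ for some constant $\eta>1$, where $I:=\mathrm{KL}(p_1\|p_0)=\int_{\mathrm{supp}(p_1)}\log(p_1/p_0)p_1\,d\mu$), the NGLR-CuSum stopping time is $\widehat{\tau}(b):=\inf\{n>1:\max_{(n-m_b)^+<k\le n-1}\sum_{i=k}^n\widehat{Z}^{n,k}_i\ge b\}$, where $(x)^+=\max\{0,x\}$. *)

(* Defs.v *)
From HB Require Import structures.
From mathcomp Require Import all_boot all_order all_algebra.
From mathcomp Require Import all_classical all_reals all_analysis.
Set Implicit Arguments. Unset Strict Implicit. Unset Printing Implicit Defensive.
Import Order.TTheory GRing.Theory Num.Theory.
Import numFieldNormedType.Exports.
Local Open Scope classical_set_scope.
Local Open Scope ring_scope.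

Section QCD.
Context {R : realType} {dT : measure_display} {T : measurableType dT}.

Definition is_density (mu : {measure set T -> \bar R}) (f : T -> R) : Prop :=
  measurable_fun setT f /\ (forall x, 0 <= f x) /\
  (\int[mu]_x (f x)%:E = 1)%E.

Definition KL (mu : {measure set T -> \bar R}) (p1 p0 : T -> R) : \bar R :=
  (\int[mu]_(x in [set x | p1 x != 0%R])
     (if p0 x == 0%R then +oo else (ln (p1 x / p0 x) * p1 x)%:E))%E.

Context {d : measure_display} {Omega : measurableType d}.

Definition iid_density (P : probability Omega R) (mu : {measure set T -> \bar R})
    (p0 : T -> R) (X : nat -> Omega -> T) : Prop :=
  (forall i, (0 < i)%N -> measurable_fun setT (X i)) /\
  (forall i, (0 < i)%N -> forall A, measurable A ->
      P (X i @^-1` A) = (\int[mu]_(x in A) (p0 x)%:E)%E) /\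
  (forall (n : nat) (A : nat -> set T), (forall i, measurable (A i)) ->
      P (\bigcap_(i in [set i | (0 < i <= n)%N]) (X i @^-1` A i)) =
      (\prod_(1 <= i < n.+1) P (X i @^-1` A i))%E).

(* the sample X_k, ..., X_{i-1}, X_{i+1}, ..., X_n *)
Definition loo_sample (X : nat -> Omega -> T) (n k i : nat) (w : Omega) : seq T :=
  [seq X j w | j <- iota k (i - k)] ++ [seq X j w | j <- iota i.+1 (n - i)].

Definition phat (est : seq T -> T -> R) (X : nat -> Omega -> T) (n k i : nat)
    (w : Omega) : T -> R := est (loo_sample X n k i w).

Definition lratio (est : seq T -> T -> R) (p0 : T -> R) (X : nat -> Omega -> T)
    (n k i : nat) (w : Omega) : R :=
  phat est X n k i w (X i w) / p0 (X i w).

Definition Zhat (est : seq T -> T -> R) (p0 : T -> R) (X : nat -> Omega -> T)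
    (n k i : nat) (w : Omega) : \bar R :=
  let r := lratio est p0 X n k i w in
  if 0 < r then (ln r)%:E else -oo%E.

Definition nglr_stat (est : seq T -> T -> R) (p0 : T -> R) (X : nat -> Omega -> T)
    (m n : nat) (w : Omega) : \bar R :=
  (\big[maxe/-oo]_((n - m).+1 <= k < n)
     \sum_(k <= i < n.+1) Zhat est p0 X n k i w)%E.

(* NGLR-CuSum stopping time, inf of the empty set = +oo *)
Definition tauhat (est : seq T -> T -> R) (p0 : T -> R) (X : nat -> Omega -> T)
    (m : nat) (b : R) (w : Omega) : \bar R :=
  ereal_inf [set (n%:R)%:E | n in [set n : nat | (1 < n)%N /\
                                   (b%:E <= nglr_stat est p0 X m n w)%E]].

End QCD.

(* Main.v *)
Require Import Defs.
From HB Require Import structures.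
From mathcomp Require Import all_boot all_order all_algebra.
From mathcomp Require Import all_classical all_reals all_analysis.
From mathcomp Require Import lra.
From mathcomp Require Import zify.
From mathcomp Require Import measurable_realfun.
Import Order.TTheory GRing.Theory Num.Theory.
Import numFieldNormedType.Exports.
Local Open Scope classical_set_scope.
Local Open Scope ring_scope.
Section Helpers.
Context {R : realType}.
Local Open Scope ereal_scope.

Lemma measurable_inv : measurable_fun [set: R] (@GRing.inv R).
Proof.
have -> : [set: R] = [set 0%R] `|` ~` [set 0%R] by rewrite setUv.
apply/measurable_funU => //.
  exact: measurableC.
split; first exact: measurable_fun_set1.
apply: measurable_realfun.open_continuous_measurable_fun.
  apply: closed_openC. apply: accessible_closed_set1. apply: hausdorff_accessible. exact: Rhausdorff.
move=> x /set_mem /eqP x0; exact: inv_continuous.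
Qed.

Lemma bigmaxe_ge (I : eqType) (s : seq I) (F : I -> \bar R) j :
  j \in s -> F j <= \big[maxe/-oo]_(i <- s) F i.
Proof.
elim: s => // x s IH; rewrite inE big_cons le_max => /orP[/eqP->|/IH->];
  by rewrite ?lexx ?orbT.
Qed.

Lemma bigmaxe_le (I : eqType) (s : seq I) (F : I -> \bar R) (c : R) :
  c%:E <= \big[maxe/-oo]_(i <- s) F i -> exists2 i, i \in s & c%:E <= F i.
Proof.
elim: s => [|x s IH]; first by rewrite big_nil leNgt ltNye.
rewrite big_cons le_max => /orP[H|/IH[i Hi Hc]].
  by exists x => //; rewrite inE eqxx.
by exists i => //; rewrite inE Hi orbT.
Qed.

Lemma measurable_bigmaxe d (T : measurableType d) (I : eqType) (s : seq I)
  (F : I -> T -> \bar R) :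
  (forall i, i \in s -> measurable_fun [set: T] (F i)) ->
  measurable_fun [set: T] (fun w => \big[maxe/-oo]_(i <- s) F i w).
Proof.
elim: s => [_|x s IH H].
  under eq_fun do rewrite big_nil; exact: measurable_cst.
under eq_fun do rewrite big_cons.
apply: measurable_maxe; first by apply: H; rewrite inE eqxx.
by apply: IH => i Hi; apply: H; rewrite inE Hi orbT.
Qed.

Lemma sum_Zf (I : eqType) (s : seq I) (r : I -> R) :
  \sum_(i <- s) (if (0 < r i)%R then (ln (r i))%:E else -oo) =
  if all (fun i => 0 < r i)%R s then (\sum_(i <- s) ln (r i))%R%:E else -oo.
Proof.
elim: s => [|x s IH]; first by rewrite !big_nil.
rewrite !big_cons IH /=; case: ifP => hx /=; last by rewrite addNye.
case: ifP => _; first by rewrite EFinD.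
by rewrite addeNy.
Qed.

Lemma ln_prod (I : eqType) (s : seq I) (r : I -> R) :
  all (fun i => 0 < r i)%R s ->
  (0 < \prod_(i <- s) r i)%R /\ (\sum_(i <- s) ln (r i) = ln (\prod_(i <- s) r i))%R.
Proof.
elim: s => [|x s IH]; first by rewrite !big_nil ln1.
rewrite /= => /andP[hx /IH[hp hs]]; rewrite !big_cons; split.
  exact: mulr_gt0.
by rewrite lnM ?hs // posrE.
Qed.

Lemma sumZ_prod (I : eqType) (s : seq I) (r : I -> R) (c : R) :
  c%:E <= \sum_(i <- s) (if (0 < r i)%R then (ln (r i))%:E else -oo) ->
  (expR c <= \prod_(i <- s) r i)%R.
Proof.
rewrite sum_Zf; case: ifP => [/ln_prod [hp ->]|]; last by rewrite leNgt ltNye.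
rewrite lee_fin => H.
by rewrite -(lnK hp) ?posrE // ler_expR.
Qed.

Lemma measure_bigsetU_le d (T : measurableType d) (mu : {measure set T -> \bar R})
  (I : eqType) (s : seq I) (F : I -> set T) :
  (forall i, i \in s -> measurable (F i)) ->
  measurable (\big[setU/set0]_(i <- s) F i) /\
  mu (\big[setU/set0]_(i <- s) F i) <= \sum_(i <- s) mu (F i).
Proof.
elim: s => [|x s IH] mF; first by rewrite !big_nil measure0.
have [mU hU] : measurable (\big[setU/set0]_(i <- s) F i) /\
  mu (\big[setU/set0]_(i <- s) F i) <= \sum_(i <- s) mu (F i).
  by apply: IH => i Hi; apply: mF; rewrite inE Hi orbT.
have mx : measurable (F x) by apply: mF; rewrite inE eqxx.
rewrite !big_cons; split; first exact: measurableU.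
apply: le_trans (measureU2 _ _ _) _ => //.
exact: leeD2l.
Qed.

Lemma mem_bigsetU (T : Type) (I : eqType) (s : seq I) (F : I -> set T) x w :
  x \in s -> F x w -> (\big[setU/set0]_(i <- s) F i) w.
Proof.
elim: s => // y s IH; rewrite inE big_cons => /orP[/eqP<- Fw|/IH H Fw].
  by left.
by right; apply: H.
Qed.

Lemma sum_le_const (I : eqType) (s : seq I) (f : I -> \bar R) (c : R) :
  (forall i, i \in s -> f i <= c%:E) ->
  \sum_(i <- s) f i <= ((size s)%:R * c)%:E.
Proof.
elim: s => [|x s IH] H; first by rewrite big_nil mul0r.
rewrite big_cons /= -addn1 natrD mulrDl mul1r EFinD [X in _ <= X]addeC.
apply: leeD; first by apply: H; rewrite inE eqxx.
by apply: IH => i Hi; apply: H; rewrite inE Hi orbT.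
Qed.

End Helpers.
Theorem lemma2 (R : realType) (d : measure_display) (Omega : measurableType d)
  (P : probability Omega R) (dim : nat)
  (mu : {measure set (dim.-tuple R) -> \bar R})
  (p0 p1 : dim.-tuple R -> R) (X : nat -> Omega -> dim.-tuple R)
  (est : seq (dim.-tuple R) -> dim.-tuple R -> R)
  (m : R -> nat) (sig : R) (balpha : R -> R) :
  is_density mu p0 -> is_density mu p1 ->
  iid_density P mu p0 X ->
  (forall s, is_density mu (est s)) ->
  (forall n k i : nat, (1 <= k <= i)%N -> (i <= n)%N ->
     measurable_fun setT (fun w => phat est X n k i w (X i w))) ->
  (forall b, (0 < m b)%N) ->
  (exists eta : R, 1 < eta /\
     forall c : R, (c%:E * KL mu p1 p0 < eta%:E)%E ->
       exists B : R, forall b, B <= b -> c <= (m b)%:R / b) ->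
  0 < sig ->
  (exists b0 : R, forall b, b0 <= b -> forall k : nat, (1 <= k)%N ->
     (\int[P]_w
        (\big[maxe/-oo]_(k <= n < (k + m b).+1)
           (\prod_(k <= i < n.+1) lratio est p0 X n k i w)%:E)
      <= (b `^ sig)%:E)%E) ->
  (forall a, 0 < a < 1 ->
     sig <= balpha a /\ balpha a - sig * ln (balpha a) = `|ln a| + ln 8) ->
  forall eps : R, 0 < eps -> exists delta : R, 0 < delta /\
    forall a, 0 < a < delta -> a < 1 ->
      (((1 - eps) / a)%:E <=
         \int[P]_w tauhat est p0 X (m (balpha a)) (balpha a) w)%E.
Proof.
move=> dp0 _ iid dest mphat m0 _ sig0 [b0 Hb0] hba eps eps0.
set M := Num.max b0 1.
have M1 : 1 <= M by rewrite le_max lexx orbT.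
have M0 : 0 < M by apply: lt_le_trans M1.
set C := M + sig * (`|ln sig| + `|ln M|).
exists (Num.min (1/2) (expR (- C))); split.
  by rewrite lt_min expR_gt0 andbT divr_gt0.
move=> a /andP[a0]; rewrite lt_min => /andP[a12 aC] a1.
have := hba a; rewrite a0 a1 => /(_ isT) [hsb hb].
set b := balpha a in hsb hb *.
have bpos : 0 < b by apply: lt_le_trans hsb.
have C1 : 1 <= C.
  rewrite /C; apply: le_trans M1 _; rewrite lerDl; apply: mulr_ge0; [exact: ltW | exact: addr_ge0].
have lna : ln a < - C.
  by rewrite -ltr_expR lnK ?posrE.
have ln8 : 0 < ln (8 : R) by rewrite ln_gt0 // ltr1n.
have nla : `|ln a| = - ln a.
  rewrite ltr0_norm //; apply: (lt_trans lna); lra.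
have bM : M <= b.
  rewrite leNgt; apply/negP => bltM.
  have h1 : ln sig <= ln b by rewrite ler_ln ?posrE.
  have h2 : sig * ln sig <= sig * ln b by rewrite ler_pM2l.
  have h3 : - `|ln sig| <= ln sig by rewrite lerNl ler_normr lexx orbT.
  have h4 : 0 <= `|ln M| by [].
  have h5 : sig * (- `|ln sig|) <= sig * ln sig by rewrite ler_pM2l.
  have h6 : 0 <= sig * `|ln M| by rewrite mulr_ge0 // ltW.
  have : b - sig * ln b < C.
    rewrite /C mulrDr; move: h5; rewrite mulrN => h5; lra.
  rewrite hb nla; lra.
have bb0 : b0 <= b by apply: le_trans bM; rewrite le_max lexx.
have b1 : 1 <= b by apply: le_trans bM.
have hpow : b `^ sig = a / 8 * expR b.
  rewrite /powR (gt_eqF bpos) mulrC.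
  have -> : ln b * sig = b + (ln a - ln 8).
    by move: hb; rewrite nla mulrC; lra.
  rewrite expRD [in RHS]mulrC; congr (_ * _); rewrite expRD lnK ?posrE// expRN lnK ?posrE//.
case: dp0 => mp0 [p0ge0 _].
case: iid => mX _.
set mm := m b.
pose Mk k w := (\big[maxe/-oo]_(k <= n < (k + mm).+1) (\prod_(k <= i < n.+1) lratio est p0 X n k i w)%:E)%E.
pose Bk k := [set w | ((expR b)%:E <= Mk k w)%E].
have mLr n k i : (1 <= k <= i)%N -> (i <= n)%N -> measurable_fun setT (fun w => lratio est p0 X n k i w).
  move=> hki hin.
  have mXi : measurable_fun setT (X i) by apply: mX; clear -hki; lia.
  exact: (measurable_funM (mphat _ _ _ hki hin) (measurableT_comp measurable_inv (measurableT_comp mp0 mXi))).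
have Lr0 n k i w : 0 <= lratio est p0 X n k i w.
  apply: divr_ge0; last exact: p0ge0.
  by rewrite /phat; case: (dest (loo_sample X n k i w)) => _ [].
have mMk k : (1 <= k)%N -> measurable_fun setT (Mk k).
  move=> k1; apply: measurable_bigmaxe => n; rewrite mem_index_iota => /andP[kn nlt].
  apply/measurable_EFinP; apply: measurable_prod => i.
  rewrite mem_index_iota => /andP[ki iln]; apply: mLr; clear -k1 kn ki iln; lia.
have Mk0 k w : (0 <= Mk k w)%E.
  have hk : k \in index_iota k (k + mm).+1.
    by rewrite mem_index_iota; clear -m0; have := m0 b; rewrite /mm; lia.
  apply: (le_trans _ (bigmaxe_ge _ (index_iota k (k + mm).+1) (fun n => (\prod_(k <= i < n.+1) lratio est p0 X n k i w)%:E) k hk)).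
  by rewrite lee_fin; apply: prodr_ge0.
have mBk k : (1 <= k)%N -> measurable (Bk k).
  move=> k1; have := emeasurable_fun_c_infty measurableT (mMk k k1) ((expR b)%:E).
  by rewrite setTI.
have PBk k : (1 <= k)%N -> (P (Bk k) <= (a / 8)%:E)%E.
  move=> k1.
  have H1 : ((expR b)%:E * P (Bk k) <= \int[P]_w Mk k w)%E.
    have HI : (\int[P]_(x in setT) (\1_(Bk k) x)%:E = P (Bk k))%E.
      by rewrite integral_indic ?setIT //; exact: mBk.
    rewrite -HI.
    rewrite -(integralZl_indic measurableT (fun _ => Bk k) (expR b) _ (mBk k k1)); last first.
      by move=> h; exfalso; have := expR_gt0 b; lra.
    apply: ge0_le_integral => //.
    - apply/measurable_EFinP; apply: measurable_funM => //.
      exact: (measurable_indic (mBk k k1)).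
    - exact: mMk.
    - move=> x _; rewrite /indic; case: (boolP (x \in Bk k)) => [/set_mem H|_].
        by rewrite mulr1.
      by rewrite mulr0.
  have H2 := Hb0 b bb0 k k1.
  rewrite hpow in H2.
  have H3 := le_trans H1 H2.
  move: H3; rewrite -(fineK (fin_num_measure P _ (mBk k k1))) -EFinM !lee_fin.
  rewrite [in X in X -> _]mulrC ler_pM2r ?expR_gt0 //.
set N := Num.Def.trunc (2 / a).
have /andP[NL NU] : N%:R <= 2 / a < N.+1%:R.
  by apply: truncn_itv; rewrite divr_ge0 // ltW.
pose B := \big[setU/set0]_(k <- index_iota 1 N) Bk k.
have [mB PB] : measurable B /\ (P B <= \sum_(k <- index_iota 1 N) P (Bk k))%E.
  apply: measure_bigsetU_le => k; rewrite mem_index_iota => /andP[k1 _].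
  exact: mBk.
have PB2 : (P B <= (N%:R * (a / 8))%:E)%E.
  apply: le_trans PB _; apply: le_trans (sum_le_const _ (index_iota 1 N) (fun k => P (Bk k)) (a / 8) _) _.
    by move=> k; rewrite mem_index_iota => /andP[k1 _]; exact: PBk.
  rewrite lee_fin ler_pM2r ?divr_gt0 // ler_nat size_iota; clear; lia.
have tau0 w : (0 <= tauhat est p0 X mm b w)%E.
  by apply/ereal_infP => _ [n _ <-]; rewrite lee_fin ler0n.
have tau_ge w : ~ B w -> ((N%:R)%:E <= tauhat est p0 X mm b w)%E.
  move=> nB; apply/ereal_infP => _ [n [n1 hn] <-]; rewrite lee_fin ler_nat.
  rewrite leqNgt; apply/negP => nN; apply: nB.
  move: hn; rewrite /nglr_stat => /bigmaxe_le [k].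
  rewrite mem_index_iota => /andP[k1 kn] hs.
  have hp := sumZ_prod _ (index_iota k n.+1) (fun i => lratio est p0 X n k i w) b hs.
  apply: (@mem_bigsetU _ _ (index_iota 1 N) Bk k w).
    by rewrite mem_index_iota; clear -k1 kn nN; lia.
  have hn : n \in index_iota k (k + mm).+1.
    by rewrite mem_index_iota; clear -k1 kn; lia.
  rewrite /Bk /Mk /=.
  apply: (le_trans _ (bigmaxe_ge _ (index_iota k (k + mm).+1) (fun n => (\prod_(k <= i < n.+1) lratio est p0 X n k i w)%:E) n hn)).
  by rewrite lee_fin.
have Hint : ((N%:R)%:E * P (~` B) <= \int[P]_w tauhat est p0 X mm b w)%E.
  have HI : (\int[P]_(x in setT) (N%:R * \1_(~` B) x)%:E = (N%:R)%:E * P (~` B))%E.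
    rewrite (integralZl_indic measurableT (fun _ => ~` B) (N%:R) _ (measurableC mB)); last first.
      by move=> h; exfalso; have := ler0n R N; lra.
    by rewrite integral_indic ?setIT //; exact: measurableC.
  rewrite -HI.
  rewrite !ge0_integralTE /=; last 2 first.
  all: try (by move=> x; exact: tau0).
  all: try (by move=> x; rewrite lee_fin; apply: mulr_ge0 => //; rewrite /indic ler0n).
  apply: ereal_sup_le => _ [h hle <-]; exists h => // x; apply: le_trans (hle x) _.
  rewrite /indic; case: (boolP (x \in ~` B)) => [/set_mem nB|_].
    by rewrite mulr1; exact: tau_ge.
  by rewrite mulr0; exact: tau0.
move: Hint PB2; rewrite probability_setC // -(fineK (fin_num_measure P _ mB)).
set pB := fine (P B); rewrite lee_fin => Hint PB2.
have E1 : (1 - pB%:E = (1 - pB)%:E)%E by [].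
move: Hint; rewrite E1.
rewrite -EFinM => Hint.
apply: le_trans Hint.
rewrite lee_fin.
have Na : N%:R * a <= 2.
  have := ler_wpM2r (ltW a0) NL; rewrite divfK // gt_eqF //.
have Na2 : 2 < (N%:R + 1) * a.
  have := ltr_pM2r a0 (2 / a) (N.+1%:R); rewrite NU divfK ?gt_eqF // natr1.
  by move=> ->.
have pB14 : pB <= 1 / 4 by move: PB2; rewrite mulrA; lra.
have N0 : 0 <= (N%:R : R) := ler0n R N.
suff final : (1 - eps) / a <= N%:R * (1 - pB).
  exact: final.
rewrite ler_pdivrMr //.
have H34 : 3 / 4 <= 1 - pB by lra.
have : (2 - a) * (3 / 4) <= (N%:R * a) * (1 - pB).
  apply: ler_pM; lra.
rewrite mulrAC; lra.
Qed.
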